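(* Let $\lambda$ be a partition with $n$ parts and let $\beta \in U_\lambda(n)$. If $\beta \notin UGC_\lambda(n)$, then the terminal pair $(\lambda,\beta)$ is not nonpermutable; i.e. there is a permutation $\pi \neq (1,\dots,n)$ of $[n]$ with $\mathcal{LD}_\lambda(\beta;\pi) \neq \emptyset$.
   Context: Fix an integer $n \geq 1$ and write $[k] = \{1,\dots,k\}$. A partition is $\lambda = (\lambda_1,\dots,\lambda_n)$ with $\lambda_1 \geq \dots \geq \lambda_n \geq 0$ integers. Let $R_\lambda \subseteq [n-1]$ be the set of $q \in [n-1]$ with $\lambda_q > \lambda_{q+1}$; write its elements $q_1 < \dots < q_r$, and set $q_0 := 0$, $q_{r+1} := n$. For $h \in [r+1]$ the $h$-th carrel is the index interval $\{q_{h-1}+1,\dots,q_h\}$. A $\lambda$-tuple is an $n$-tuple $\beta$ with entries in $[n]$, considered with this carrel structure; it is upper if $\beta_i \geq i$ for all $i$. $U_\lambda(n)$ is the set of upper $\lambda$-tuples. Critical indices: for $\beta \in U_\lambda(n)$ and $h \in [r+1]$, set $x_1 := q_h$; given $x_{u-1}$, if some index $x$ with $q_{h-1} < x < x_{u-1}$ satisfies $\beta_{x_{u-1}} - \beta_x > x_{u-1} - x$, let $x_u$ be the largest such $x$, otherwise stop. The $x_u$ are the critical indices of $\beta$ in carrel $h$, and the pairs $(x_u, \beta_{x_u})$ form its critical list. The critical list of $\beta$ is a flag critical list if for every $h \in [r]$, $\beta_{q_h} \leq \beta_k$ where $k$ is the smallest critical index of $\beta$ in carrel $h+1$. $UGC_\lambda(n)$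 is the set of $\beta \in U_\lambda(n)$ whose critical list is a flag critical list. Lattice paths: lattice points are integer pairs $(a,b)$ with $a \geq 0$, $b \geq 1$. A lattice path is a sequence of lattice points each consecutive step of which is $(a,b) \to (a+1,b)$ (easterly) or $(a,b) \to (a,b+1)$ (southerly). An $n$-path is $(\Lambda_1,\dots,\Lambda_n)$ with $\Lambda_m$ a lattice path starting at $(n-m,m)$. The terminals of $(\lambda,\beta)$ are $P_m := (\lambda_m + n - m, \beta_m)$, $m \in [n]$. For a permutation $\pi$ of $[n]$, $\mathcal{LD}_\lambda(\beta;\pi)$ is the set of $n$-paths with $\Lambda_m$ ending at $P_{\pi_m}$ for every $m$ and with no two distinct components sharing a lattice point. The pair $(\lambda,\beta)$ is nonpermutable if $\mathcal{LD}_\lambda(\beta;\pi) = \emptyset$ for every permutation $\pi \neq (1,\dots,n)$. *)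

(* Defs.v *)
(* Indices are 1-based natural numbers; a tuple
   indexed by [n] is a function nat -> nat of which only the values at
   1..n matter. *)
From mathcomp Require Import all_boot.
Set Implicit Arguments. Unset Strict Implicit. Unset Printing Implicit Defensive.

Definition is_partition (n : nat) (lam : nat -> nat) : Prop :=
  forall i, 1 <= i -> i < n -> lam i.+1 <= lam i.

Definition Rlam (n : nat) (lam : nat -> nat) : seq nat :=
  [seq q <- iota 1 n.-1 | lam q.+1 < lam q].

Definition qseq (n : nat) (lam : nat -> nat) : seq nat :=
  0 :: rcons (Rlam n lam) n.

Definition qq (n : nat) (lam : nat -> nat) (h : nat) : nat := nth 0 (qseq n lam) h.

Definition rr (n : nat) (lam : nat -> nat) : nat := size (Rlam n lam).

Definition upper_tuple (n : nat) (beta : nat -> nat) : Prop :=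
  forall i, 1 <= i <= n -> i <= beta i <= n.

(* the condition beta_y - beta_x > y - x (in Z), written in nat without subtraction *)
Definition crit_cond (beta : nat -> nat) (y x : nat) : bool :=
  y + beta x < beta y + x.

Inductive critical (beta : nat -> nat) (lo hi : nat) : nat -> Prop :=
| crit_top : critical beta lo hi hi
| crit_step y x : critical beta lo hi y -> lo < x -> x < y -> crit_cond beta y x ->
    (forall x', x < x' -> x' < y -> ~~ crit_cond beta y x') ->
    critical beta lo hi x.

Definition critical_in (n : nat) (lam beta : nat -> nat) (h x : nat) : Prop :=
  critical beta (qq n lam h.-1) (qq n lam h) x.

Definition flag_critical (n : nat) (lam beta : nat -> nat) : Prop :=
  forall h, 1 <= h <= rr n lam ->
  forall k, critical_in n lam beta h.+1 k ->
    (forall x, critical_in n lam beta h.+1 x -> k <= x) ->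
    beta (qq n lam h) <= beta k.

Definition in_UGC (n : nat) (lam beta : nat -> nat) : Prop :=
  upper_tuple n beta /\ flag_critical n lam beta.

Definition lattice_step (p p' : nat * nat) : bool :=
  (p' == (p.1.+1, p.2)) || (p' == (p.1, p.2.+1)).

Definition lattice_path_from_to (s e : nat * nat) (P : seq (nat * nat)) : Prop :=
  exists rest, P = s :: rest /\ path lattice_step s rest /\ last s rest = e
    /\ all (fun x => 0 < x.2) P.

Definition is_perm_n (n : nat) (pi : nat -> nat) : Prop :=
  (forall m, 1 <= m <= n -> 1 <= pi m <= n) /\
  (forall m m', 1 <= m <= n -> 1 <= m' <= n -> pi m = pi m' -> m = m').

Definition terminal (n : nat) (lam beta : nat -> nat) (m : nat) : nat * nat :=
  (lam m + n - m, beta m).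

Definition in_LD (n : nat) (lam beta pi : nat -> nat)
    (Lam : nat -> seq (nat * nat)) : Prop :=
  (forall m, 1 <= m <= n ->
     lattice_path_from_to (n - m, m) (terminal n lam beta (pi m)) (Lam m)) /\
  (forall m m', 1 <= m <= n -> 1 <= m' <= n -> m <> m' ->
     forall x, x \in Lam m -> x \notin Lam m').

Definition nonpermutable (n : nat) (lam beta : nat -> nat) : Prop :=
  forall pi, is_perm_n n pi -> (exists m, 1 <= m <= n /\ pi m <> m) ->
    ~ (exists Lam, in_LD n lam beta pi Lam).

(* Main.v *)
Require Import Defs.
From mathcomp Require Import all_boot.
From mathcomp Require Import zify.
From Stdlib Require Import Classical.

Set Implicit Arguments. Unset Strict Implicit. Unset Printing Implicit Defensive.


Fixpoint hseg (a b len : nat) : seq (nat * nat) :=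
  if len is l.+1 then (a.+1, b) :: hseg a.+1 b l else [::].
Fixpoint vseg (a b len : nat) : seq (nat * nat) :=
  if len is l.+1 then (a, b.+1) :: vseg a b.+1 l else [::].

Lemma hseg_path a b len : path lattice_step (a, b) (hseg a b len).
Proof. elim: len a => [|l IH] a //=. by rewrite /lattice_step eqxx /= IH. Qed.
Lemma vseg_path a b len : path lattice_step (a, b) (vseg a b len).
Proof. elim: len b => [|l IH] b //=. by rewrite /lattice_step eqxx orbT /= IH. Qed.
Lemma hseg_last a b len : last (a, b) (hseg a b len) = (a + len, b).
Proof. elim: len a => [|l IH] a /=; [by rewrite addn0 | by rewrite IH addSnnS]. Qed.
Lemma vseg_last a b len : last (a, b) (vseg a b len) = (a, b + len).
Proof. elim: len b => [|l IH] b /=; [by rewrite addn0 | by rewrite IH addSnnS]. Qed.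
Lemma hseg_mem a b len (u v : nat) : (u, v) \in hseg a b len -> v = b /\ a < u <= a + len.
Proof.
elim: len a => [|l IH] a //=. rewrite inE => /orP [/eqP [-> ->] | /IH]; lia.
Qed.
Lemma vseg_mem a b len (u v : nat) : (u, v) \in vseg a b len -> u = a /\ b < v <= b + len.
Proof.
elim: len b => [|l IH] b //=. rewrite inE => /orP [/eqP [-> ->] | /IH]; lia.
Qed.

Definition eses a0 b0 c1 r1 c2 r2 : seq (nat * nat) :=
  (a0, b0) :: (hseg a0 b0 (c1 - a0) ++ vseg c1 b0 (r1 - b0) ++
               hseg c1 r1 (c2 - c1) ++ vseg c2 r1 (r2 - r1)).

Lemma eses_mem a0 b0 c1 r1 c2 r2 a b : a0 <= c1 -> c1 <= c2 -> b0 <= r1 -> r1 <= r2 ->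
  (a, b) \in eses a0 b0 c1 r1 c2 r2 ->
  (b = b0 /\ a0 <= a <= c1) \/ (a = c1 /\ b0 <= b <= r1) \/
  (b = r1 /\ c1 <= a <= c2) \/ (a = c2 /\ r1 <= b <= r2).
Proof.
move=> h1 h2 h3 h4; rewrite inE !mem_cat.
move=> /orP [/eqP [-> ->] | /orP [/hseg_mem | /orP [/vseg_mem | /orP [/hseg_mem | /vseg_mem]]]]; lia.
Qed.

Lemma eses_lp a0 b0 c1 r1 c2 r2 : a0 <= c1 -> c1 <= c2 -> b0 <= r1 -> r1 <= r2 -> 0 < b0 ->
  lattice_path_from_to (a0, b0) (c2, r2) (eses a0 b0 c1 r1 c2 r2).
Proof.
move=> h1 h2 h3 h4 h5.
exists (hseg a0 b0 (c1 - a0) ++ vseg c1 b0 (r1 - b0) ++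
               hseg c1 r1 (c2 - c1) ++ vseg c2 r1 (r2 - r1)).
split; first by [].
split.
  rewrite !cat_path hseg_path hseg_last (subnKC h1) vseg_path vseg_last (subnKC h3).
  by rewrite hseg_path hseg_last (subnKC h2) vseg_path.
split.
  by rewrite !last_cat hseg_last (subnKC h1) vseg_last (subnKC h3) hseg_last (subnKC h2)
     vseg_last (subnKC h4).
apply/allP => [[a b]] /(eses_mem h1 h2 h3 h4) /=; lia.
Qed.

Lemma mono_lam n lam : is_partition n lam ->
  forall x y, 1 <= x -> x <= y -> y <= n -> lam y <= lam x.
Proof.
move=> Hp x y Hx Hxy Hy. elim: y Hxy Hy => [|y IH] Hxy Hy; first lia.
rewrite leq_eqVlt in Hxy; case/orP: Hxy => [/eqP -> //| Hlt].
apply: leq_trans (Hp y _ _) (IH _ _); lia.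
Qed.

Lemma crit_facts beta lo hi k : lo < hi -> critical beta lo hi k ->
  lo < k <= hi /\ forall x, k < x <= hi -> x + beta k < beta x + k.
Proof.
move=> Hlh; elim => [| y x Hy [IH1 IH2] Hlo Hxy Hc Hmax].
  split; [lia | move=> x; lia].
split; first lia.
move=> x' Hx'. rewrite /crit_cond in Hc.
case: (ltngtP x' y) => H.
- have := Hmax x'. rewrite /crit_cond -leqNgt. move=> /(_ ltac:(lia) H). lia.
- have := IH2 x' ltac:(lia). lia.
- subst; lia.
Qed.

Lemma q_facts n lam h : 1 <= n -> 1 <= h <= rr n lam ->
  1 <= qq n lam h /\ qq n lam h < qq n lam h.+1 /\ qq n lam h.+1 <= n /\
  (qq n lam h.+1 < n -> lam (qq n lam h.+1).+1 < lam (qq n lam h.+1)).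
Proof.
move=> Hn; case: h => [//|h] /= Hh.
rewrite /qq /qseq /= /rr in Hh *.
have memR x : x \in Rlam n lam -> 1 <= x < n /\ lam x.+1 < lam x.
  rewrite mem_filter mem_iota => /andP [H1 /andP [H2 H3]]; lia.
have Hs : sorted ltn (Rlam n lam) := sorted_filter ltn_trans _ (iota_ltn_sorted 1 _).
rewrite nth_rcons Hh.
have hq := memR _ (mem_nth 0 Hh).
rewrite nth_rcons; case: (ltnP h.+1 (size (Rlam n lam))) => H2.
  have hJ := memR _ (mem_nth 0 H2).
  have := sorted_ltn_nth ltn_trans 0 Hs h h.+1 Hh H2 (ltnSn h). case: hq hJ => [/andP [hq1 hq2] hq3] [/andP [hJ1 hJ2] hJ3] H; repeat split => //; exact: ltnW.
have -> : h.+1 == size (Rlam n lam) by apply/eqP; lia.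
case: hq => [/andP [hq1 hq2] hq3]; repeat split => //; by rewrite ltnn.
Qed.

Definition pperm (i k m : nat) : nat :=
  if (i <= m) && (m < k) then m.+1 else if m == k then i else m.
Definition CC (n : nat) (lam : nat -> nat) (x : nat) : nat := lam x + n - x.
Definition par n lam beta (i k J m : nat) : nat * nat * nat * nat :=
  if m < i then (CC n lam m, m, CC n lam m, beta m)
  else if m < k then (CC n lam m.+1, m, CC n lam m.+1, beta m.+1)
  else if m == k then (CC n lam k - 1, beta k + 1, CC n lam i, beta i)
  else if m <= J then (CC n lam m - 1, beta k + 1 + m - k, CC n lam m, beta m)
  else (CC n lam m, m, CC n lam m, beta m).
Definition LamF n lam beta i k J m : seq (nat * nat) :=
  let: (c1, r1, c2, r2) := par n lam beta i k J m in eses (n - m) m c1 r1 c2 r2.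

Lemma par_cases n lam beta i k J m : i < k ->
  (m < i /\ par n lam beta i k J m = (CC n lam m, m, CC n lam m, beta m) /\ pperm i k m = m) \/
  (i <= m < k /\ par n lam beta i k J m = (CC n lam m.+1, m, CC n lam m.+1, beta m.+1)
     /\ pperm i k m = m.+1) \/
  (m = k /\ par n lam beta i k J m = (CC n lam k - 1, beta k + 1, CC n lam i, beta i)
     /\ pperm i k m = i) \/
  (k < m <= J /\ par n lam beta i k J m = (CC n lam m - 1, beta k + 1 + m - k, CC n lam m, beta m)
     /\ pperm i k m = m) \/
  (J < m /\ par n lam beta i k J m = (CC n lam m, m, CC n lam m, beta m)
     /\ pperm i k m = m).
Proof.
move=> Hik; rewrite /par /pperm.
case: (ltnP m i) => H1.
  left; rewrite /=. have -> : (m == k) = false by apply/eqP; lia. done.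
case: (ltnP m k) => H2.
  by right; left.
rewrite /=.
case: (eqVneq m k) => [->|H3].
  by right; right; left.
case: (leqP m J) => H4.
  by right; right; right; left; split => //; lia.
by right; right; right; right; split => //; lia.
Qed.

Ltac tmono H x y := try (have ? := H x y ltac:(lia) ltac:(lia) ltac:(lia)).
Ltac tup H x := try (have ? := H x ltac:(lia)).
Ltac tcr H x := try (have ? := H x ltac:(lia)).

Lemma par_ok (n : nat) (lam beta : nat -> nat) (i k J : nat)
  (Hmono : forall x y, 1 <= x -> x <= y -> y <= n -> lam y <= lam x)
  (Hup : forall x, 1 <= x <= n -> x <= beta x <= n)
  (Hi : 1 <= i) (Hik : i < k) (HkJ : k <= J) (HJn : J < n)
  (Hbeta : beta k < beta i)
  (Himax : forall x, i < x < k -> beta x <= beta k)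
  (Hcrit : forall x, k < x <= J -> x + beta k < beta x + k)
  (HlamJ : lam J.+1 < lam J) m : 1 <= m <= n ->
  let: (c1, r1, c2, r2) := par n lam beta i k J m in
  n - m <= c1 <= c2 /\ m <= r1 <= r2 /\ c2 = lam (pperm i k m) + n - pperm i k m /\
  r2 = beta (pperm i k m).
Proof.
move=> Hm.
case: (par_cases n lam beta J m Hik) =>
  [[H1 [-> ->]]|[[H1 [-> ->]]|[[H1 [-> ->]]|[[H1 [-> ->]]|[H1 [-> ->]]]]]];
rewrite /CC;
tup @Hup m; tup @Hup m.+1; tup @Hup i; tup @Hup k; tcr @Hcrit m;
tmono @Hmono m J; tmono @Hmono m.+1 J; tmono @Hmono k J; tmono @Hmono i k; try subst m; lia.
Qed.


Ltac cls n lam beta J m Hik E C :=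
  case: (par_cases n lam beta J m Hik) =>
    [[C [E _]]|[[C [E _]]|[[C [E _]]|[[C [E _]]|[C [E _]]]]]].

Lemma CC_eq (n : nat) (lam : nat -> nat) x : x <= n -> CC n lam x + x = lam x + n.
Proof. rewrite /CC; lia. Qed.

Ltac chain Hmono l := lazymatch l with
 | (?x :: ?y :: ?r) => have ? := @Hmono x y ltac:(lia) ltac:(lia) ltac:(lia); chain Hmono (y :: r)
 | _ => idtac end.

Lemma ef_mem a0 b0 c r a b : a0 <= c -> b0 <= b0 -> b0 <= r ->
  (a, b) \in eses a0 b0 c b0 c r ->
  (b = b0 /\ a0 <= a <= c) \/ (a = c /\ b0 <= b <= r).
Proof.
move=> h1 _ h3 /(eses_mem h1 (leqnn c) (leqnn b0) h3); lia.
Qed.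

Ltac gen_sub := repeat match goal with
 | H : context [?x - ?y] |- _ =>
   let z := fresh "z" in let Hz := fresh "Hz" in
   have Hz : y <= x by lia;
   have := subnK Hz; set z := x - y in *; clearbody z; clear Hz; move=> ?
 end.

Ltac fin H1 H2 := move=> *;
  repeat match goal with H : _ \/ _ |- _ => case: H => H | H : _ /\ _ |- _ => case: H => ? ? end; lia.

Lemma disj_lt (n : nat) (lam beta : nat -> nat) (i k J : nat)
  (Hmono : forall x y, 1 <= x -> x <= y -> y <= n -> lam y <= lam x)
  (Hup : forall x, 1 <= x <= n -> x <= beta x <= n)
  (Hi : 1 <= i) (Hik : i < k) (HkJ : k <= J) (HJn : J < n)
  (Hbeta : beta k < beta i)
  (Himax : forall x, i < x < k -> beta x <= beta k)
  (Hcrit : forall x, k < x <= J -> x + beta k < beta x + k)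
  (HlamJ : lam J.+1 < lam J) m m' a b : 1 <= m -> m < m' -> m' <= n ->
  (a, b) \in LamF n lam beta i k J m -> (a, b) \in LamF n lam beta i k J m' -> False.
Proof.
move=> Hm Hmm' Hm' Ha Hb.
have Om := @par_ok n lam beta i k J Hmono Hup Hi Hik HkJ HJn Hbeta Himax Hcrit HlamJ m ltac:(lia); have Om' := @par_ok n lam beta i k J Hmono Hup Hi Hik HkJ HJn Hbeta Himax Hcrit HlamJ m' ltac:(lia).
rewrite /LamF in Ha Hb.
have HJ1 := @CC_eq n lam (J.+1) HJn.
have HJ := @CC_eq n lam (J) ltac:(lia).
have Hk := @CC_eq n lam (k) ltac:(lia).
have Hi' := @CC_eq n lam (i) ltac:(lia).
have Hmc := @CC_eq n lam (m) ltac:(lia).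
have Hmc' := @CC_eq n lam (m') ltac:(lia).
cls n lam beta J m Hik E C1; rewrite E /= in Om Ha;
case: Om => [/andP [o1 o2] [/andP [o3 o4] _]];
cls n lam beta J m' Hik E' C2; try (exfalso; clear - C1 C2 Hmm' Hik HkJ; lia); rewrite E' /= in Om' Hb;
case: Om' => [/andP [p1 p2] [/andP [p3 p4] _]]; clear E E';
first [have {}Ha := ef_mem o1 o3 o4 Ha | have {}Ha := eses_mem o1 o2 o3 o4 Ha];
first [have {}Hb := ef_mem p1 p3 p4 Hb | have {}Hb := eses_mem p1 p2 p3 p4 Hb].
- chain Hmono [:: m; m']; fin Ha Hb.
- have := @CC_eq n lam (m'.+1) ltac:(lia); chain Hmono [:: m; m'.+1]; fin Ha Hb.
- chain Hmono [:: m; i; k]; fin Ha Hb.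
- chain Hmono [:: m; m']; fin Ha Hb.
- chain Hmono [:: m; m']; fin Ha Hb.
- have := @CC_eq n lam (m.+1) ltac:(lia); have := @CC_eq n lam (m'.+1) ltac:(lia);
  chain Hmono [:: m.+1; m'.+1]; fin Ha Hb.
- have := @CC_eq n lam (m.+1) ltac:(lia); chain Hmono [:: i; m.+1; k];
  have : beta m.+1 <= beta k.
  { case: (ltnP m.+1 k) => ?; [apply: Himax; lia | by have -> : m.+1 = k by lia]. }
  fin Ha Hb.
- have := @CC_eq n lam (m.+1) ltac:(lia); chain Hmono [:: m.+1; k; m']; fin Ha Hb.
- have := @CC_eq n lam (m.+1) ltac:(lia). chain Hmono [:: m.+1; k; J; J.+1; m']; fin Ha Hb.
- have := @Hcrit m' ltac:(lia); chain Hmono [:: i; k; m']; fin Ha Hb.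
- chain Hmono [:: i; k; J; J.+1; m']; fin Ha Hb.
- have := @Hcrit m' ltac:(lia); have := @Hcrit m ltac:(lia); chain Hmono [:: k; m; m']; fin Ha Hb.
- have := @Hcrit m ltac:(lia); chain Hmono [:: k; m; J; J.+1; m']; fin Ha Hb.
- chain Hmono [:: m; m']; fin Ha Hb.
Qed.


Lemma exists_i (beta : nat -> nat) q k : q < k -> beta k < beta q ->
  exists i, q <= i < k /\ beta k < beta i /\ forall x, i < x < k -> beta x <= beta k.
Proof.
move=> Hqk Hb.
have ex : exists x, (x < k) && (beta k < beta x) by exists q; apply/andP.
have ub : forall x, (x < k) && (beta k < beta x) -> x <= k by move=> x /andP [? _]; lia.
case: (ex_maxnP ex ub) => i /andP [Hi1 Hi2] Hmax.
exists i; split; [| split => //].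
  have := Hmax q; rewrite Hqk Hb => /(_ isT); lia.
move=> x Hx; rewrite leqNgt; apply/negP => Hc.
have := Hmax x; rewrite Hc andbT. have -> : x < k by lia. move=> /(_ isT); lia.
Qed.

Lemma construct n lam beta i k J : is_partition n lam -> upper_tuple n beta ->
  1 <= i -> i < k -> k <= J -> J < n -> beta k < beta i ->
  (forall x, i < x < k -> beta x <= beta k) ->
  (forall x, k < x <= J -> x + beta k < beta x + k) ->
  lam J.+1 < lam J ->
  exists pi, is_perm_n n pi /\ (exists m, 1 <= m <= n /\ pi m <> m) /\
    exists Lam, in_LD n lam beta pi Lam.
Proof.
move=> Hp Hup Hi Hik HkJ HJn Hb Himax Hcrit HlamJ.
have Hmono := mono_lam Hp.
have PC := fun m => par_cases n lam beta J m Hik.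
exists (pperm i k); split.
  split.
    move=> m Hm.
    case: (PC m) => [[C [_ ->]]|[[C [_ ->]]|[[C [_ ->]]|[[C [_ ->]]|[C [_ ->]]]]]]; lia.
  move=> m m' Hm Hm'.
  case: (PC m) => [[C [_ ->]]|[[C [_ ->]]|[[C [_ ->]]|[[C [_ ->]]|[C [_ ->]]]]]];
  case: (PC m') => [[C' [_ ->]]|[[C' [_ ->]]|[[C' [_ ->]]|[[C' [_ ->]]|[C' [_ ->]]]]]]; lia.
split.
  exists k; split; first lia.
  case: (PC k) => [[C [_ ->]]|[[C [_ ->]]|[[C [_ ->]]|[[C [_ ->]]|[C [_ ->]]]]]]; lia.
exists (LamF n lam beta i k J); split.
  move=> m Hm.
  have := par_ok Hmono Hup Hi Hik HkJ HJn Hb Himax Hcrit HlamJ Hm.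
  rewrite /LamF /terminal.
  case: (par n lam beta i k J m) => [[[c1 r1] c2] r2] /=
    [/andP [h1 h2] [/andP [h3 h4] [e1 e2]]]; subst c2 r2.
  apply: eses_lp => //; lia.
move=> m m' Hm Hm' Hne [a b] Ha; apply/negP => Hb'.
case: (ltngtP m m') => H.
- apply: (disj_lt Hmono Hup Hi Hik HkJ HJn Hb Himax Hcrit HlamJ _ H _ Ha Hb'); lia.
- apply: (disj_lt Hmono Hup Hi Hik HkJ HJn Hb Himax Hcrit HlamJ _ H _ Hb' Ha); lia.
- by apply: Hne.
Qed.

Theorem lemma6p2 (n : nat) (lam beta : nat -> nat) :
  1 <= n -> is_partition n lam -> upper_tuple n beta ->
  ~ in_UGC n lam beta ->
  ~ nonpermutable n lam beta /\
  exists pi, is_perm_n n pi /\ (exists m, 1 <= m <= n /\ pi m <> m) /\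
    exists Lam, in_LD n lam beta pi Lam.
Proof.
move=> Hn Hp Hup HU.
suff [pi [Hpi [Hne HL]]] : exists pi, is_perm_n n pi /\ (exists m, 1 <= m <= n /\ pi m <> m) /\
    exists Lam, in_LD n lam beta pi Lam.
  split; last by exists pi.
  by move=> Hnp; exact: (Hnp pi Hpi Hne HL).
have [h [k [Hh [Hk Hlt]]]] : exists h k, 1 <= h <= rr n lam /\
    critical_in n lam beta h.+1 k /\ beta k < beta (qq n lam h).
  apply: NNPP => Hne; apply: HU; split => // h Hh k Hk _.
  case: (leqP (beta (qq n lam h)) (beta k)) => // Hlt.
  by exfalso; apply: Hne; exists h, k.
have [Hq1 [HqJ [HJn' HJdesc]]] := q_facts Hn Hh.
rewrite /critical_in /= in Hk.
have [/andP [Hqk HkJ] Hcr] := crit_facts HqJ Hk.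
have HJn : qq n lam h.+1 < n.
  rewrite ltn_neqAle HJn' andbT; apply/eqP => EJ.
  rewrite EJ in HkJ Hcr.
  have Hbn := Hup n ltac:(lia).
  case: (ltngtP k n) => Hkn; last first.
  - rewrite Hkn in Hlt. have := Hup (qq n lam h) ltac:(lia). lia.
  - lia.
  - have := Hcr n ltac:(lia). have := Hup k ltac:(lia). lia.
have [i [Hi [Hbi Himax]]] := exists_i Hqk Hlt.
apply: (@construct n lam beta i k (qq n lam h.+1)) => //; try lia.
Qed.
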